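(* Let $p$ be a prime with $p\equiv\pm1\pmod{10}$ and $n$ an integer such that $\mathcal{S}_{p,n}:=p^2 16^n+1$ is prime. Let $E$ be the elliptic curve $y^2=x^3-x$ and $E_{30}$ the elliptic curve $30y^2=x^3-x$. Then $E_{30}(\mathbb{F}_{\mathcal{S}_{p,n}})\cong E(\mathbb{F}_{\mathcal{S}_{p,n}})$ (indeed $30$ is a square modulo $\mathcal{S}_{p,n}$, so $E_{30}\cong E$ over $\mathbb{F}_{\mathcal{S}_{p,n}}$). *)

(* Defs.v *)
From mathcomp Require Import all_boot all_order all_algebra.
Set Implicit Arguments. Unset Strict Implicit. Unset Printing Implicit Defensive.
Import GRing.Theory.
Local Open Scope ring_scope.

(* Projective points are represented as [option (F * F)]: [None] is the point
   at infinity O, [Some (x, y)] an affine point. *)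
Definition ec_pt (F : fieldType) := option (F * F).

Definition on_ec (F : fieldType) (d : F) (P : ec_pt F) : bool :=
  match P with
  | None => true
  | Some (x, y) => d * y ^+ 2 == x ^+ 3 - x
  end.

Definition ec_add (F : fieldType) (d : F) (P Q : ec_pt F) : ec_pt F :=
  match P, Q with
  | None, _ => Q
  | _, None => P
  | Some (x1, y1), Some (x2, y2) =>
    if x1 == x2 then
      if y1 + y2 == 0 then None
      else
        let l := (3%:R * x1 ^+ 2 - 1) / (2%:R * d * y1) in
        let x3 := d * l ^+ 2 - x1 - x2 in
        Some (x3, l * (x1 - x3) - y1)
    else
      let l := (y2 - y1) / (x2 - x1) in
      let x3 := d * l ^+ 2 - x1 - x2 in
      Some (x3, l * (x1 - x3) - y1)
  end.

Definition ec_groups_iso (F : fieldType) (d1 d2 : F) : Prop :=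
  exists f : ec_pt F -> ec_pt F,
    [/\ forall P, on_ec d1 P -> on_ec d2 (f P),
        {in on_ec d1 &, injective f},
        forall Q, on_ec d2 Q -> exists2 P, on_ec d1 P & f P = Q
      & {in on_ec d1 &, forall P Q, f (ec_add d1 P Q) = ec_add d2 (f P) (f Q)}].

Definition S_pn (p n : nat) : nat := (p ^ 2 * 16 ^ n + 1)%N.

(* Main.v *)
Require Import Defs.
From mathcomp Require Import all_boot all_order all_algebra all_solvable all_field.
From mathcomp Require Import zify ring lra.
Set Implicit Arguments. Unset Strict Implicit. Unset Printing Implicit Defensive.
Import GRing.Theory.
Local Open Scope ring_scope.

Lemma euler_sq (F : finFieldType) (h : nat) (x : F) :
  #|F| = (h.*2).+1 -> (0 < h)%N -> x ^+ h = 1 -> exists y, y ^+ 2 = x.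
Proof.
move=> cF h0 xh.
pose rs := enum (predC1 (0:F)).
have h2 : (0 < h.*2)%N by rewrite double_gt0.
have un : all (h.*2).-unity_root rs.
  apply/allP=> z; rewrite mem_enum /= => nz.
  rewrite unity_rootE; apply/eqP.
  have := expf_card z; rewrite cF exprS => e.
  by apply: (mulfI nz); rewrite e mulr1.
have urs : uniq rs by rewrite enum_uniq.
have srs : (h.*2 <= size rs)%N by rewrite -cardE cardC1 cF.
have /hasP[w _ pw] := has_prim_root h2 un urs srs.
have x2 : x ^+ h.*2 = 1 by rewrite -addnn exprD xh mulr1.
have [[i _] /= xi] := prim_rootP pw x2.
have : (h.*2 %| i * h)%N by rewrite (prim_order_dvd pw) exprM -xi xh.
rewrite -muln2 [(i * h)%N]mulnC dvdn_pmul2l // => /dvdnP[k ik].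
exists (w ^+ k); by rewrite -exprM xi ik.
Qed.

Lemma dvdp_powsub (F : fieldType) (m a b : {poly F}) k :
  m %| a - b -> m %| a ^+ k - b ^+ k.
Proof.
move=> hab; elim: k => [|k IH]; first by rewrite !expr0 subrr dvdp0.
have -> : a ^+ k.+1 - b ^+ k.+1 = a * (a ^+ k - b ^+ k) + (a - b) * b ^+ k.
  by rewrite !exprS; ring.
by apply: dvdp_add; [apply: dvdp_mull | apply: dvdp_mulr].
Qed.

Lemma gauss_trick (F : fieldType) (q h : nat) (m t : {poly F}) (d : F) :
  q = (h.*2).+1 -> (1 < size m)%N -> d != 0 ->
  m %| t ^+ 2 - d%:P -> m %| t ^+ q + t -> d ^+ h = -1.
Proof.
move=> -> sm d0 h1 h2.
have h3 := dvdp_powsub h h1.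
rewrite -exprM mul2n -rmorphXn in h3.
have h4 : m %| t * (d ^+ h + 1)%:P.
  have -> : t * (d ^+ h + 1)%:P = (t ^+ (h.*2).+1 + t) - t * (t ^+ (h.*2) - (d ^+ h)%:P).
    rewrite polyCD exprS; ring.
  by apply: dvdp_sub => //; apply: dvdp_mull.
apply/eqP; rewrite -subr_eq0 opprK; apply/negPn/negP => c0.
have h5 : m %| t.
  by rewrite -(dvdpZr _ _ c0) -mul_polyC mulrC.
have h6 : m %| d%:P.
  have -> : d%:P = t ^+ 2 - (t ^+ 2 - d%:P) by ring.
  by apply: dvdp_sub => //; rewrite expr2; apply: dvdp_mulr.
have := dvdp_leq _ h6; rewrite polyC_eq0 d0 size_polyC d0 => /(_ isT).
by rewrite leqNgt sm.
Qed.

Lemma dvdX_shift (F : fieldType) (N k r : nat) :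
  ('X^N - 1 : {poly F}) %| 'X^(N * k + r) - 'X^r.
Proof.
have -> : ('X^(N * k + r) - 'X^r : {poly F}) = ((('X^N) ^+ k) - 1 ^+ k) * 'X^r.
  by rewrite exprD exprM expr1n; ring.
by apply: dvdp_mulr; apply: dvdp_powsub.
Qed.

Section Frob.
Variable q : nat.
Hypothesis qp : prime q.
Local Notation F := ('F_q : fieldType).

Lemma chq : q \in [pchar {poly F}].
Proof. by rewrite pchar_poly pchar_Fp. Qed.

Lemma frob_add (x y : {poly F}) : (x + y) ^+ q = x ^+ q + y ^+ q.
Proof. by rewrite -!(pFrobenius_autE chq) rmorphD. Qed.

Lemma frob_sub (x y : {poly F}) : (x - y) ^+ q = x ^+ q - y ^+ q.
Proof. by rewrite -!(pFrobenius_autE chq) rmorphB. Qed.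

Lemma three_nonres (h : nat) : q = (h.*2).+1 -> (q %% 3 = 2)%N -> (- 3%:R : F) ^+ h = -1.
Proof.
move=> qh q3.
pose m : {poly F} := 'X^2 + 'X + 1.
pose t : {poly F} := 'X *+ 2 + 1.
apply: (@gauss_trick F q h m t) => //.
- by rewrite /m -addrA size_addl ?size_polyXn // size_addl ?size_polyX ?size_polyC ?oner_neq0.
- rewrite oppr_eq0 -(dvdn_pcharf (pchar_Fp qp)); apply/negP => qd.
  have le3 := dvdn_leq (isT : (0 < 3)%N) qd.
  have q2 : q = 2%N by lia.
  by move: qd; rewrite q2.
- have -> : t ^+ 2 - (- 3%:R : F)%:P = m * 4%:R.
    by rewrite polyCN polyC_natr /m /t; ring.
  exact: dvdp_mulr.
- have -> : t ^+ q + t = ('X^(3 * (q %/ 3) + 2) - 'X^2) *+ 2 + m *+ 2.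
    rewrite /t frob_add expr1n -(pFrobenius_autE chq) pFrobenius_autMn pFrobenius_autE.
    have -> : ('X : {poly F}) ^+ q = 'X^(3 * (q %/ 3) + 2).
      by rewrite -{3}q3 mulnC -divn_eq.
    rewrite /m; ring.
  apply: dvdp_add; rewrite -mulr_natr; apply: dvdp_mulr => //.
  apply: dvdp_trans (dvdX_shift _ _ _ _).
  have -> : ('X^3 - 1 : {poly F}) = ('X - 1) * m by rewrite /m; ring.
  exact: dvdp_mull.
Qed.

Lemma five_nonres (h : nat) : q = (h.*2).+1 -> (q %% 5 = 2)%N -> (5%:R : F) ^+ h = -1.
Proof.
move=> qh q5.
pose m : {poly F} := 1 + 'X + 'X^2 + 'X^3 + 'X^4.
pose t : {poly F} := 'X - 'X^2 - 'X^3 + 'X^4.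
set k := (q %/ 5)%N.
have hq : (5 * k + 2 = q)%N by rewrite /k; lia.
have m5 : m %| 'X^5 - 1.
  have -> : ('X^5 - 1 : {poly F}) = ('X - 1) * m by rewrite /m; ring.
  exact: dvdp_mull.
have sh : forall N r, m %| 'X^(5 * N + r) - 'X^r.
  by move=> N r; apply: dvdp_trans m5 (dvdX_shift _ _ _ _).
apply: (@gauss_trick F q h m t) => //.
- rewrite ltnNge; apply/negP => le1.
  have le4 : (size m <= 4)%N by apply: leq_trans le1 _.
  have := nth_default 0 le4; rewrite -/(m`_4).
  rewrite /m !coefD !coefXn coefX coefC /= !add0r => /eqP; by rewrite oner_eq0.
- rewrite -(dvdn_pcharf (pchar_Fp qp)); apply/negP => qd.
  have le5 := dvdn_leq (isT : (0 < 5)%N) qd.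
  have : (q = 2)%N by lia.
  by move=> q2; move: qd; rewrite q2.
- have -> : t ^+ 2 - (5%:R : F)%:P = m * (-5%:R + 'X *+ 5 + 'X^2 - 'X^3 *+ 3 + 'X^4).
    by rewrite polyC_natr /m /t; ring.
  exact: dvdp_mulr.
- have -> : t ^+ q + t = ('X^(5 * k + 2) - 'X^2) - ('X^(5 * (2 * k) + 4) - 'X^4)
      - ('X^(5 * (3 * k + 1) + 1) - 'X^1) + ('X^(5 * (4 * k + 1) + 3) - 'X^3).
    rewrite /t frob_add !frob_sub -!exprM.
    have -> : ('X : {poly F}) ^+ q = 'X^(5 * k + 2) by rewrite hq.
    have -> : (2 * q = 5 * (2 * k) + 4)%N by lia.
    have -> : (3 * q = 5 * (3 * k + 1) + 1)%N by lia.
    have -> : (4 * q = 5 * (4 * k + 1) + 3)%N by lia.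
    ring.
  by apply: dvdp_add; [apply: dvdp_sub; [apply: dvdp_sub|]|]; apply: sh.
Qed.
End Frob.

Lemma ec_iso_sq (F : fieldType) (d t : F) :
  t ^+ 2 = d -> t != 0 -> (2%:R : F) != 0 -> ec_groups_iso d 1.
Proof.
move=> ht t0 two0.
pose f (P : ec_pt F) : ec_pt F :=
  match P with None => None | Some (x, y) => Some (x, t * y) end.
exists f; split.
- move=> [[x y]|] //=; rewrite mul1r exprMn ht => /eqP <-; by [].
- move=> [[x1 y1]|] [[x2 y2]|] _ _ //= [] -> /(mulfI t0) -> //.
- move=> [[x y]|] /= H; last by exists None.
  exists (Some (x, y / t)); last by rewrite /f mulrC divfK.
  rewrite /= -ht -(eqP H) mul1r; apply/eqP; field; exact t0.
- move=> [[x1 y1]|] [[x2 y2]|] _ _ //=.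
  case: eqP => [<-|nx].
  + have -> : (t * y1 + t * y2 == 0) = (y1 + y2 == 0).
      by rewrite -mulrDr mulf_eq0 (negbTE t0).
    case: ifP => _ //.
    have hl : (3%:R * x1 ^+ 2 - 1) / (2%:R * 1 * (t * y1))
        = t * ((3%:R * x1 ^+ 2 - 1) / (2%:R * d * y1)).
      have [->|y0] := eqVneq y1 0; first by rewrite !mulr0 !invr0 !mulr0.
      rewrite -ht; field.
      by rewrite y0 t0 two0.
    rewrite hl /= -ht; congr (Some (_, _)); ring.
  + have hl : (t * y2 - t * y1) / (x2 - x1) = t * ((y2 - y1) / (x2 - x1)).
      by rewrite -mulrBr mulrA.
    rewrite hl /= -ht; congr (Some (_, _)); ring.
Qed.

Lemma fermat_q (q h : nat) (y : 'F_q) : prime q -> q = (h.*2).+1 -> y != 0 -> y ^+ h.*2 = 1.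
Proof.
move=> qp qh y0.
have : y ^+ (h.*2).+1 = y.
  by rewrite -qh; have := expf_card y; rewrite card_Fp.
rewrite exprS => e.
by apply: (mulfI y0); rewrite e mulr1.
Qed.

Unset Implicit Arguments.
Theorem lemma4 (p n : nat) (hp : prime p)
  (hp10 : (p %% 10 == 1)%N || (p %% 10 == 9)%N)
  (hS : prime (S_pn p n)) :
  ec_groups_iso (30%:R : 'F_(S_pn p n)) (1 : 'F_(S_pn p n)).
Proof.
set q := S_pn p n.
have p9 : (9 <= p)%N.
  case/orP: hp10 => /eqP h10; last by lia.
  have p1 : p != 1%N by apply/eqP => e; move: hp; rewrite e.
  by move/eqP: p1 => p1; lia.
have pp : (81 <= p ^ 2)%N by rewrite expnS expn1; nia.
have q82 : (82 <= q)%N.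
  rewrite /q /S_pn; have : (0 < 16 ^ n)%N by rewrite expn_gt0.
  move: pp; clear; nia.
have podd : odd p by case/orP: hp10 => /eqP h10; apply/negPn/negP => /negbTE ev; lia.
case: n => [|n'] in q hS q82 *.
  have := prime_oddPn hS; rewrite /S_pn expn0 muln1 oddD oddX podd /= => H.
  by have := H isT; lia.
pose h := (p ^ 2 * 8 * 16 ^ n')%N.
have qh : q = (h.*2).+1.
  rewrite /q /S_pn /h -muln2 (expnS 16); set A := (p ^ 2)%N; set B := (16 ^ n')%N.
  by rewrite addn1; congr (_.+1); ring.
have h0 : (0 < h)%N by rewrite /h !muln_gt0 expn_gt0; lia.
have p3 : (p ^ 2 %% 3 = 1)%N.
  have : ~~ (3 %| p)%N.
    apply/negP => /(prime_nt_dvdP hp) => /(_ isT) e; lia.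
  rewrite -modnXm /dvdn; move: (ltn_pmod p (isT : (0 < 3)%N)).
  by case: (p %% 3)%N => [|[|[|]]].
have p5 : (p ^ 2 %% 5 = 1)%N.
  rewrite -modnXm.
  have : (p %% 5 = 1 \/ p %% 5 = 4)%N by case/orP: hp10 => /eqP; lia.
  by case=> ->.
have q3 : (q %% 3 = 2)%N.
  by rewrite /q /S_pn -modnDml -modnMm p3 -modnXm /= exp1n.
have q5 : (q %% 5 = 2)%N.
  by rewrite /q /S_pn -modnDml -modnMm p5 -modnXm /= exp1n.
have m3 := three_nonres hS qh q3.
have m5 := five_nonres hS qh q5.
have nz k : (0 < k < q)%N -> (k%:R : 'F_q) != 0.
  move=> /andP[k0 kq]; rewrite -(dvdn_pcharf (pchar_Fp hS)); apply/negP => /dvdn_leq.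
  by move=> /(_ k0); rewrite leqNgt kq.
have two0 : (2%:R : 'F_q) != 0 by apply: nz; rewrite /=; lia.
pose a : 'F_q := (p * 4 ^ n'.+1)%:R.
have a2 : a ^+ 2 = -1.
  apply/eqP; rewrite -subr_eq0 opprK /a -natrX natr1.
  have -> : ((p * 4 ^ n'.+1) ^ 2).+1 = q.
    by rewrite /q /S_pn addn1 expnMn -expnM (mulnC n'.+1) expnM.
  by rewrite -(dvdn_pcharf (pchar_Fp hS)) dvdnn.
have ah : a ^+ h = 1.
  have -> : h = (4 * (p ^ 2 * 2 * 16 ^ n'))%N by rewrite /h; ring.
  have a4 : a ^+ 4 = 1 by rewrite (exprM a 2 2) a2 sqrrN expr1n.
  by rewrite exprM a4 expr1n.
have eh : (-1 : 'F_q) ^+ h = 1.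
  have -> : h = (2 * (p ^ 2 * 4 * 16 ^ n'))%N by rewrite /h; ring.
  by rewrite exprM sqrrN expr1n expr1n.
have two_h : (2%:R : 'F_q) ^+ h = 1.
  have e1 : (1 + a) ^+ 2 = 2%:R * a by rewrite sqrrD a2 expr1n; ring.
  have a1 : 1 + a != 0.
    apply/negP => /eqP e0; have := e1; rewrite e0 expr0n /= => /esym/eqP.
    rewrite mulf_eq0 (negbTE two0) /= => /eqP a0.
    by move: a2; rewrite a0 expr0n /= => /eqP; rewrite eq_sym oppr_eq0 oner_eq0.
  have := fermat_q hS qh a1; rewrite -mul2n exprM e1 exprMn ah mulr1.
  by [].
have t30 : (30%:R : 'F_q) ^+ h = 1.
  have -> : (30%:R : 'F_q) = 2%:R * (- 3%:R) * (-1) * 5%:R.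
    by rewrite mulrN1 mulrN opprK -!natrM.
  by rewrite !exprMn two_h m3 eh m5 mulr1 mul1r mulrN1 opprK.
have cF : #|'F_q| = (h.*2).+1 by rewrite card_Fp // -qh.
have [t ht] := euler_sq cF h0 t30.
apply: (ec_iso_sq ht) => //.
apply/negP => /eqP t0.
have H : (0 < 30 < q)%N by apply/andP; split => //; lia.
by have := nz 30%N H; rewrite -ht t0 expr0n /=.
Qed.
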